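(* Let $U\subset\mathbb{R}^d$ be open and let $F,G:U\times[0,\infty)\to\mathbb{R}$ be, respectively, upper and lower semicontinuous. Assume that for a fixed $C>0$ and all $(x,t)\in U\times[0,\infty)$, $F(x,t)\le Ct$ and $G(x,t)\ge-Ct$, and that $\min(F_t,F)\le0$ and $\max(G_t,G)\ge0$ in the viscosity sense (in $U\times(0,\infty)$). Then $F\le0$ and $G\ge0$ on $U\times[0,\infty)$.
   Context: $\min(F_t,F)\le0$ in the viscosity sense means: whenever $\psi$ is smooth near a point $(x_0,t_0)$ (and Lipschitz elsewhere) and $F-\psi$ attains a (global) maximum value $0$ at $(x_0,t_0)$, then $F(x_0,t_0)\le0$ or $\psi_t(x_0,t_0)\le0$. $\max(G_t,G)\ge0$ in the viscosity sense means: whenever $\psi$ is such a test function and $G-\psi$ attains a (global) minimum value $0$ at $(x_0,t_0)$, then $G(x_0,t_0)\ge0$ or $\psi_t(x_0,t_0)\ge0$. *)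

(* Defs.v *)
From HB Require Import structures.
From mathcomp Require Import all_boot all_order all_algebra.
From mathcomp Require Import all_classical all_reals all_analysis.
Set Implicit Arguments. Unset Strict Implicit. Unset Printing Implicit Defensive.
Import Order.TTheory GRing.Theory Num.Theory.
Import numFieldNormedType.Exports.
Local Open Scope classical_set_scope.
Local Open Scope ring_scope.

Definition usc_on {T : topologicalType} {R : realType} (D : set T) (f : T -> R) :=
  forall p, D p -> forall e : R, 0 < e -> \forall q \near p, D q -> f q < f p + e.
Definition lsc_on {T : topologicalType} {R : realType} (D : set T) (f : T -> R) :=
  forall p, D p -> forall e : R, 0 < e -> \forall q \near p, D q -> f p - e < f q.

Fixpoint Ck_on {R : realType} {V : normedModType R} (k : nat) (A : set V)
    (f : V -> R) : Prop :=
  match k with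
  | 0 => {within A, continuous f}
  | k.+1 => {within A, continuous f} /\
            (forall x v, A x -> derivable f x v) /\
            (forall v, Ck_on k A (fun x => 'D_v f x))
  end.

Definition smooth_near {R : realType} {V : normedModType R} (f : V -> R) (p : V) :=
  exists A : set V, [/\ open A, A p & forall k, Ck_on k A f].

Definition lipschitz {R : realType} {V : normedModType R} (f : V -> R) :=
  exists L : R, forall p q, `|f p - f q| <= L * `|p - q|.

Definition test_fun {R : realType} {V : normedModType R} (psi : V -> R) (p : V) :=
  smooth_near psi p /\ lipschitz psi.

Definition dt {R : realType} {d : nat} (psi : 'rV[R]_d * R -> R) (x0 : 'rV[R]_d)
  (t0 : R) : R := derive1 (fun s : R => psi (x0, s)) t0.

Definition visc_min_sub {R : realType} {d : nat} (U : set 'rV[R]_d)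
    (F : 'rV[R]_d * R -> R) :=
  forall (psi : 'rV[R]_d * R -> R) (x0 : 'rV[R]_d) (t0 : R),
    U x0 -> 0 < t0 -> test_fun psi (x0, t0) ->
    (forall x t, U x -> 0 < t -> F (x, t) - psi (x, t) <= 0) ->
    F (x0, t0) - psi (x0, t0) = 0 ->
    F (x0, t0) <= 0 \/ dt psi x0 t0 <= 0.

Definition visc_max_super {R : realType} {d : nat} (U : set 'rV[R]_d)
    (G : 'rV[R]_d * R -> R) :=
  forall (psi : 'rV[R]_d * R -> R) (x0 : 'rV[R]_d) (t0 : R),
    U x0 -> 0 < t0 -> test_fun psi (x0, t0) ->
    (forall x t, U x -> 0 < t -> G (x, t) - psi (x, t) >= 0) ->
    G (x0, t0) - psi (x0, t0) = 0 ->
    G (x0, t0) >= 0 \/ dt psi x0 t0 >= 0.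

(* Main.v *)
Require Import Defs.
From HB Require Import structures.
From mathcomp Require Import all_boot all_order all_algebra.
From mathcomp Require Import all_classical all_reals all_analysis.
From mathcomp Require Import ring lra.
Set Warnings "-all".
Import Order.TTheory GRing.Theory Num.Theory.
Import numFieldNormedType.Exports.
Local Open Scope classical_set_scope.
Local Open Scope ring_scope.
Section S.
Variable R : realType.
Variable V : normedModType R.

Lemma dq_lemma (f : V -> R) (a v : V) (A B : R) :
  (forall h : R, f (h *: v + a) = f a + h * A + h ^+ 2 * B) ->
  derivable f a v /\ 'D_v f a = A.
Proof.
move=> H.
have E : (fun h : R => h^-1 *: ((f \o shift a) (h *: v) - f a)) @ 0^' --> A.
  have -> : A = A + 0 * B by rewrite mul0r addr0.
  apply: (@cvg_trans _ (((cst A) \+ (fun h : R => h * B)) @ 0^')); last first.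
    apply: cvg_within_filter. apply: cvgD; first exact: cvg_cst.
    apply: cvgMl. exact: cvg_id.
  apply: near_eq_cvg; near=> h.
  rewrite /= H.
  have h0 : h != 0 by near: h; exact: nbhs_dnbhs_neq.
  rewrite /= (_ : forall x : R, h^-1 *: x = h^-1 * x) //. by field.
split; first by apply/cvg_ex; exists A.
exact: cvg_lim.
Unshelve. all: by end_near. Qed.
End S.
Arguments dq_lemma {R V f a v A B}.

Section P.
Variable R : realType.
Variable d : nat.
Local Notation V := ('rV[R]_d * R)%type.

Lemma cvgD' (T : Type) (F : set_system T) (FF : Filter F) (f g : T -> R) (a b : R) :
  f @ F --> a -> g @ F --> b -> (fun x => f x + g x) @ F --> a + b.
Proof. move=> ? ?; exact: cvgD. Qed.
Lemma cvgM' (T : Type) (F : set_system T) (FF : Filter F) (f g : T -> R) (a b : R) :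
  f @ F --> a -> g @ F --> b -> (fun x => f x * g x) @ F --> a * b.
Proof. move=> ? ?; exact: cvgM. Qed.
Lemma cvgB' (T : Type) (F : set_system T) (FF : Filter F) (f g : T -> R) (a b : R) :
  f @ F --> a -> g @ F --> b -> (fun x => f x - g x) @ F --> a - b.
Proof. move=> ? ?; exact: cvgB. Qed.

Lemma cont_snd : continuous (fun p : V => p.2).
Proof. move=> p; exact: cvg_snd. Qed.

Lemma cont_coord i : continuous (fun p : V => p.1 ord0 i).
Proof.
move=> p. apply: (@continuous_comp _ _ _ fst (fun M : 'rV[R]_d => M ord0 i)).
  exact: cvg_fst.
exact: coord_continuous.
Qed.

Definition polyf (al be ga ta ka : R) (y : 'rV[R]_d) (p : V) : R :=
  al + be * p.2 + ga * (p.2 - ta)^+2 + ka * \sum_(i < d) (p.1 ord0 i - y ord0 i)^+2.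

Definition linf (c0 c1 : R) (b : 'I_d -> R) (p : V) : R :=
  c0 + c1 * p.2 + \sum_(i < d) b i * p.1 ord0 i.

Lemma polyf_cont al be ga ta ka y : continuous (polyf al be ga ta ka y).
Proof.
move=> p; rewrite /polyf.
apply: cvgD'; [apply: cvgD'; [apply: cvgD|]|].
- exact: cvg_cst.
- apply: cvgM'; first exact: cvg_cst; exact: cont_snd.
- apply: cvgM'; first exact: cvg_cst. rewrite expr2. apply: cvgM'; apply: cvgB'; (exact: cont_snd || exact: cvg_cst).
- apply: cvgM'; first exact: cvg_cst. apply: cvg_big. exact: add_continuous.
  move=> i _. rewrite expr2. apply: cvgM'; apply: cvgB'; (exact: cont_coord || exact: cvg_cst).
Qed.

Lemma linf_cont c0 c1 b : continuous (linf c0 c1 b).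
Proof.
move=> p; rewrite /linf.
apply: cvgD'; [apply: cvgD|].
- exact: cvg_cst.
- apply: cvgM'; first exact: cvg_cst; exact: cont_snd.
- apply: cvg_big. exact: add_continuous.
  move=> i _. apply: cvgM'; first exact: cvg_cst. exact: cont_coord.
Qed.

Lemma scR (h x : R) : h *: x = h * x. Proof. by []. Qed.

Lemma linf_exp c0 c1 b (p v : V) (h : R) :
  linf c0 c1 b (h *: v + p) = linf c0 c1 b p + h * (c1 * v.2 + \sum_(i < d) b i * v.1 ord0 i) + h ^+ 2 * 0.
Proof.
rewrite /linf /=.
have E : forall i, b i * (h *: v.1 + p.1) ord0 i = b i * p.1 ord0 i + h * (b i * v.1 ord0 i).
  by move=> i; rewrite !mxE; ring.
under eq_bigr => i _ do rewrite E.
rewrite big_split /= -mulr_sumr. rewrite scR; ring.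
Qed.

Lemma polyf_exp al be ga ta ka y (p v : V) (h : R) :
  polyf al be ga ta ka y (h *: v + p) = polyf al be ga ta ka y p
   + h * (be * v.2 + 2 * ga * (p.2 - ta) * v.2 + 2 * ka * \sum_(i < d) (p.1 ord0 i - y ord0 i) * v.1 ord0 i)
   + h ^+ 2 * (ga * v.2 ^+ 2 + ka * \sum_(i < d) (v.1 ord0 i) ^+ 2).
Proof.
rewrite /polyf /=.
have E : forall i, ((h *: v.1 + p.1) ord0 i - y ord0 i) ^+ 2 =
   (p.1 ord0 i - y ord0 i) ^+ 2 + h * (2 * ((p.1 ord0 i - y ord0 i) * v.1 ord0 i)) + h ^+ 2 * (v.1 ord0 i ^+ 2).
  by move=> i; rewrite !mxE; ring.
under eq_bigr => i _ do rewrite E.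
rewrite !big_split /= -!mulr_sumr scR. ring.
Qed.
End P.

Section C.
Variable R : realType.
Variable V : normedModType R.

Fixpoint pcls (n : nat) (f : V -> R) : Prop :=
  match n with
  | 0 => exists c, forall x, f x = c
  | n.+1 => continuous f /\ (forall a v, derivable f a v) /\
            (forall v, pcls n (fun x => 'D_v f x))
  end.

Lemma pcls_const n c : pcls n (fun _ => c).
Proof.
elim: n c => [|n IH] c /=; first by exists c.
split; first by move=> x; exact: cvg_cst.
split; first by move=> a v; exact: (derivable_cst c).
move=> v.
have -> : (fun x => 'D_v (fun _ : V => c) x) = (fun _ => 0).
  apply: funext => x. exact: (derive_cst c).
exact: IH.
Qed.

Lemma pcls0 n f : pcls 0 f -> pcls n f.
Proof.
move=> [c Hc].
have -> : f = (fun _ => c) by apply: funext.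
exact: pcls_const.
Qed.

Lemma pcls_Ck k (A : set V) : forall n f, pcls n f -> Ck_on k A f.
Proof.
elim: k => [|k IH] n f.
  case: n => [|n] /=.
    move=> [c Hc]. have -> : f = (fun _ => c) by apply: funext.
    apply: continuous_subspaceT => x; exact: cvg_cst.
  by move=> [Hc _]; apply: continuous_subspaceT.
move=> Hf.
have [m Hf1] : exists m, pcls m.+1 f.
  case: n Hf => [|n] Hf; [exists 0%N; exact: pcls0 | exists n; exact: Hf].
have [Hc [Hd HD]] := Hf1.
split; first exact: continuous_subspaceT.
split; first by move=> x v _; exact: Hd.
move=> v; exact: (IH m _ (HD v)).
Qed.
End C.
Arguments pcls {R V}.
Arguments polyf {R d}.
Arguments linf {R d}.
Arguments linf_exp {R d}.
Arguments polyf_exp {R d}.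
Arguments polyf_cont {R d}.
Arguments linf_cont {R d}.

Section PC.
Variable R : realType.
Variable d : nat.
Local Notation V := ('rV[R]_d * R)%type.

Lemma linf_pcls1 (c0 c1 : R) (b : 'I_d -> R) : pcls 1 (linf c0 c1 b).
Proof.
split; first exact: linf_cont.
split; first by move=> a v; exact: (dq_lemma (linf_exp c0 c1 b a v)).1.
move=> w; exists (c1 * w.2 + \sum_(i < d) b i * w.1 ord0 i) => x.
exact: (dq_lemma (linf_exp c0 c1 b x w)).2.
Qed.

Lemma polyf_pcls2 (al be ga ta ka : R) (y : 'rV[R]_d) : pcls 2 (polyf al be ga ta ka y).
Proof.
split; first exact: polyf_cont.
split; first by move=> a v; exact: (dq_lemma (polyf_exp al be ga ta ka y a v)).1.
move=> v.
have -> : (fun x => 'D_v (polyf al be ga ta ka y) x) =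
  linf (be * v.2 - 2 * ga * ta * v.2 - 2 * ka * \sum_(i < d) y ord0 i * v.1 ord0 i)
       (2 * ga * v.2) (fun i => 2 * ka * v.1 ord0 i).
  apply: funext => x; rewrite (dq_lemma (polyf_exp al be ga ta ka y x v)).2 /linf.
  have E1 : \sum_(i < d) (x.1 ord0 i - y ord0 i) * v.1 ord0 i =
            \sum_(i < d) v.1 ord0 i * x.1 ord0 i - \sum_(i < d) y ord0 i * v.1 ord0 i.
    by rewrite -sumrB; apply: eq_bigr => i _; ring.
  have E2 : \sum_(i < d) 2 * ka * v.1 ord0 i * x.1 ord0 i =
            2 * ka * \sum_(i < d) v.1 ord0 i * x.1 ord0 i.
    by rewrite mulr_sumr; apply: eq_bigr => i _; ring.
  rewrite E1 E2; ring.
exact: linf_pcls1.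
Qed.
End PC.
Section N.
Variable R : realType.
Variable d : nat.
Local Notation V := ('rV[R]_d * R)%type.

Lemma coord_le_norm (x : 'rV[R]_d) i : `|x ord0 i| <= `|x|.
Proof.
rewrite [leRHS]/Num.norm /= mx_normrE.
exact: (le_bigmax 0 (fun ij : 'I_1 * 'I_d => `|x ij.1 ij.2|) (ord0, i)).
Qed.

Lemma norm_lt_coords (x : 'rV[R]_d) e : 0 < e -> (forall i, `|x ord0 i| < e) -> `|x| < e.
Proof.
move=> e0 H; rewrite [ltLHS]/Num.norm /= mx_normrE.
apply: bigmax_lt => // -[a i] _ /=. by rewrite (ord1 a).
Qed.

Lemma norm_le_coords (x : 'rV[R]_d) e : 0 <= e -> (forall i, `|x ord0 i| <= e) -> `|x| <= e.
Proof.
move=> e0 H; rewrite [leLHS]/Num.norm /= mx_normrE.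
apply: bigmax_le => // -[a i] _ /=. by rewrite (ord1 a).
Qed.

Lemma snd_le_norm (p : V) : `|p.2| <= `|p|.
Proof. by rewrite prod_normE /= le_max lexx orbT. Qed.

Lemma fst_le_norm (p : V) : `|p.1| <= `|p|.
Proof. by rewrite prod_normE /= le_max lexx. Qed.

Lemma cap_lip (c s r : R) : 0 <= c ->
  `|Num.min (s ^+ 2) (c ^+ 2) - Num.min (r ^+ 2) (c ^+ 2)| <= 2 * c * `|s - r|.
Proof.
move=> c0.
wlog srl : s r / `|r| <= `|s|.
  move=> W; case: (leP `|r| `|s|) => h; first exact: W.
  by rewrite distrC (distrC s); apply: W; exact: ltW.
have sr2 : r ^+ 2 <= s ^+ 2 by rewrite -(ger0_norm (sqr_ge0 r)) -(ger0_norm (sqr_ge0 s)) !normrX lerXn2r // ?nnegrE.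
have tri : `|s| - `|r| <= `|s - r| by exact: lerB_dist.
have hs := normr_ge0 s; have hr := normr_ge0 r.
have es : s ^+ 2 = `|s| ^+ 2 by rewrite real_normK // num_real.
have er : r ^+ 2 = `|r| ^+ 2 by rewrite real_normK // num_real.
case: (leP (s ^+ 2) (c ^+ 2)) => h1; case: (leP (r ^+ 2) (c ^+ 2)) => h2.
- rewrite ger0_norm ?subr_ge0 // es er.
  have : `|s| <= c by rewrite -(ler_pXn2r (n:=2)) // ?nnegrE // -es.
  nra.
- lra.
- rewrite ger0_norm; last by rewrite subr_ge0.
  rewrite er.
  have h3 : `|r| <= c by rewrite -(ler_pXn2r (n:=2)) // ?nnegrE // -er.
  have h4 : c <= `|s| by rewrite -(ler_pXn2r (n:=2)) // ?nnegrE // -es ltW.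
  have h5 : c ^+ 2 - `|r| ^+ 2 = (c - `|r|) * (c + `|r|) by ring.
  rewrite h5.
  apply: (le_trans (y := (`|s| - `|r|) * (2 * c))).
    apply: ler_pM; lra.
  rewrite mulrC; apply: ler_pM; lra.
- have Z : forall z : R, `|z - z| = 0 by move=> z; rewrite subrr normr0.
  rewrite Z. apply: mulr_ge0 => //; apply: mulr_ge0 => //.
Qed.

Definition psif (al be ga ta ka de : R) (y : 'rV[R]_d) (p : V) : R :=
  al + be * p.2 + ga * Num.min ((p.2 - ta) ^+ 2) (ta ^+ 2)
  + ka * \sum_(i < d) Num.min ((p.1 ord0 i - y ord0 i) ^+ 2) (de ^+ 2).

Lemma psif_lip al be ga ta ka de y : 0 <= ta -> 0 <= de ->
  Defs.lipschitz (psif al be ga ta ka de y).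
Proof.
move=> ta0 de0.
exists (`|be| + `|ga| * (2 * ta) + `|ka| * (d%:R * (2 * de))) => p q.
set n := `|p - q|.
have h2 : `|p.2 - q.2| <= n by exact: (snd_le_norm (p - q)).
have hc : forall i, `|p.1 ord0 i - q.1 ord0 i| <= n.
  move=> i; apply: le_trans (fst_le_norm (p - q)).
  have -> : p.1 ord0 i - q.1 ord0 i = (p - q).1 ord0 i by rewrite /= !mxE.
  exact: coord_le_norm.
have hm : `|Num.min ((p.2 - ta) ^+ 2) (ta ^+ 2) - Num.min ((q.2 - ta) ^+ 2) (ta ^+ 2)| <= 2 * ta * n.
  apply: le_trans (cap_lip _ _ _ ta0) _.
  rewrite (_ : p.2 - ta - (q.2 - ta) = p.2 - q.2); last by ring.
  by apply: ler_wpM2l => //; apply: mulr_ge0.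
have hs : `|\sum_(i < d) Num.min ((p.1 ord0 i - y ord0 i) ^+ 2) (de ^+ 2) -
            \sum_(i < d) Num.min ((q.1 ord0 i - y ord0 i) ^+ 2) (de ^+ 2)| <= d%:R * (2 * de) * n.
  rewrite -sumrB; apply: le_trans (ler_norm_sum _ _ _) _.
  apply: (@le_trans _ _ (\sum_(i < d) (2 * de * n))).
    apply: ler_sum => i _; apply: le_trans (cap_lip _ _ _ de0) _.
    rewrite (_ : p.1 ord0 i - y ord0 i - (q.1 ord0 i - y ord0 i) = p.1 ord0 i - q.1 ord0 i); last by ring.
    by apply: ler_wpM2l => //; apply: mulr_ge0.
  by rewrite sumr_const card_ord -[leLHS]mulr_natl !mulrA.
rewrite /psif.
set m1 := Num.min _ _; set m2 := Num.min _ _.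
set S1 := \sum_(i < d) _; set S2 := \sum_(i < d) _.
have -> : al + be * p.2 + ga * m1 + ka * S1 - (al + be * q.2 + ga * m2 + ka * S2)
   = be * (p.2 - q.2) + ga * (m1 - m2) + ka * (S1 - S2) by ring.
apply: le_trans (ler_normD _ _) _; rewrite !normrM.
apply: le_trans (lerD (ler_normD _ _) (lexx _)) _; rewrite !normrM.
have n0 : 0 <= n by exact: normr_ge0.
have := normr_ge0 be; have := normr_ge0 ga; have := normr_ge0 ka.
have : `|be| * `|p.2 - q.2| <= `|be| * n by apply: ler_wpM2l.
have : `|ga| * `|m1 - m2| <= `|ga| * (2 * ta * n) by apply: ler_wpM2l.
have : `|ka| * `|S1 - S2| <= `|ka| * (d%:R * (2 * de) * n) by apply: ler_wpM2l.
nra.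
Qed.
End N.
Section M.
Variable R : realType.

Lemma usc_max (T : topologicalType) (K D : set T) (f : T -> R) :
  compact K -> K `<=` D -> usc_on D f -> K !=set0 ->
  (exists B, forall x, K x -> f x <= B) ->
  exists2 p, K p & forall q, K q -> f q <= f p.
Proof.
move=> cK KD usc [x0 Kx0] [B0 HB].
have hE : has_sup (f @` K).
  split; first by exists (f x0); exists x0.
  by exists B0 => _ [x Kx <-]; exact: HB.
set S := sup (f @` K).
pose Bs := fun e : R => [set q | K q /\ S - e < f q].
have FF : ProperFilter (filter_from [set e : R | 0 < e] Bs).
  apply: filter_from_proper.
    apply: filter_from_filter; first by exists 1; exact: ltr01.
    move=> i j i0 j0; exists (Num.min i j); first by rewrite /= lt_min i0 j0.
    move=> q [Kq hq]; split; split => //.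
      apply: le_lt_trans hq; rewrite lerB //; by rewrite ge_min lexx.
    apply: le_lt_trans hq; rewrite lerB //; by rewrite ge_min lexx orbT.
  move=> e e0; have [_ [x Kx <-] hx] := sup_adherent e0 hE.
  by exists x; split.
have KF : filter_from [set e : R | 0 < e] Bs K.
  by exists 1; [exact: ltr01 | move=> q []].
have [p [Kp clp]] := cK _ FF KF.
exists p => // q Kq.
have Sp : S <= f p.
  rewrite leNgt; apply/negP => fpS.
  set e := (S - f p) / 2.
  have e0 : 0 < e by rewrite /e divr_gt0 // subr_gt0.
  have Hn := usc p (KD p Kp) e e0.
  have [z [[Kz hz] hz2]] := clp (Bs e) _ (ex_intro2 _ _ e e0 (fun _ h => h)) Hn.
  have := hz2 (KD z Kz). rewrite /e in hz *. lra.
apply: le_trans Sp; apply: (sup_upper_bound hE).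
by exists q.
Qed.
End M.
Arguments psif {R d}.
Arguments psif_lip {R d}.
Arguments usc_max {R T K D f}.
Arguments pcls_Ck {R V}.
Arguments polyf_pcls2 {R d}.

Section T.
Variable R : realType.
Variable V : normedModType R.

Lemma Ck_transfer k (A : set V) : open A ->
  forall f g : V -> R, (forall x, A x -> f x = g x) -> Ck_on k A g -> Ck_on k A f.
Proof.
move=> oA; elim: k => [|k IH] f g Hfg /=.
  apply: subspace_eq_continuous => x; rewrite inE => Ax; exact/esym/Hfg.
move=> [Hc [Hd HD]].
have Nx : forall x, A x -> \forall y \near x, g y = f y.
  move=> x Ax; have : nbhs x A by apply: open_nbhs_nbhs; split.
  by apply: filterS => y Ay; rewrite Hfg.
split.
  apply: subspace_eq_continuous Hc => x; rewrite inE => Ax; exact/esym/Hfg.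
split.
  by move=> x v Ax; apply: (near_eq_derivable (Nx x Ax)); exact: Hd.
move=> v; apply: (IH _ _ _ (HD v)) => x Ax.
apply: near_eq_derive; have := Nx x Ax; apply: filterS => y; exact: esym.
Qed.
End T.

Section R1.
Variable R : realType.
Variable d : nat.
Local Notation V := ('rV[R]_d * R)%type.

Definition regA (ta de : R) (y : 'rV[R]_d) : set V :=
  [set p | ball ta ta p.2 /\ ball y de p.1].

Lemma regA_open ta de y : open (regA ta de y).
Proof.
have -> : regA ta de y = (snd @^-1` ball ta ta) `&` (fst @^-1` ball y de) by [].
apply: openI; apply: open_comp.
- by move=> p _; exact: cvg_snd.
- exact: ball_open.
- by move=> p _; exact: cvg_fst.
- exact: ball_open.
Qed.

Lemma ball_R (c e s : R) : ball c e s <-> `|s - c| < e.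
Proof. by rewrite -ball_normE /ball_ /= distrC. Qed.

Lemma ball_rV (y x : 'rV[R]_d) e : ball y e x -> forall i, `|x ord0 i - y ord0 i| < e.
Proof.
rewrite -ball_normE /ball_ /= => H i; apply: le_lt_trans H.
rewrite distrC (_ : y ord0 i - x ord0 i = (y - x) ord0 i); last by rewrite !mxE.
exact: coord_le_norm.
Qed.

Lemma rV_ball (y x : 'rV[R]_d) e : 0 < e -> (forall i, `|x ord0 i - y ord0 i| < e) -> ball y e x.
Proof.
move=> e0 H; rewrite -ball_normE /ball_ /=; apply: norm_lt_coords => // i.
by rewrite !mxE distrC; exact: H.
Qed.

Lemma sq_le (s c : R) : `|s| <= c -> s ^+ 2 <= c ^+ 2.
Proof.
move=> h; have h0 := normr_ge0 s.
have -> : s ^+ 2 = `|s| ^+ 2 by rewrite real_normK // num_real.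
nra.
Qed.

Lemma psif_polyf al be ga ta ka de y p : regA ta de y p ->
  psif al be ga ta ka de y p = polyf al be ga ta ka y p.
Proof.
move=> [/ball_R h2 /ball_rV h1]; rewrite /psif /polyf.
rewrite min_l; last exact/sq_le/ltW.
congr (_ + _ * _); apply: eq_bigr => i _.
rewrite min_l //; apply/sq_le/ltW; exact: h1.
Qed.

Lemma psif_test al be ga ta ka de y p : 0 < ta -> 0 < de -> regA ta de y p ->
  test_fun (psif al be ga ta ka de y) p.
Proof.
move=> ta0 de0 Ap; split; last exact: psif_lip (ltW ta0) (ltW de0).
exists (regA ta de y); split => //; first exact: regA_open.
move=> k; apply: (@Ck_transfer _ _ k _ (regA_open ta de y) _ (polyf al be ga ta ka y)).
  by move=> x Ax; exact: psif_polyf.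
exact: (pcls_Ck k _ 2 _ (polyf_pcls2 al be ga ta ka y)).
Qed.

Lemma psif_dt al be ga ta ka de y x1 t1 : regA ta de y (x1, t1) ->
  dt (psif al be ga ta ka de y) x1 t1 = be + 2 * ga * (t1 - ta).
Proof.
move=> Ap; rewrite /dt derive1E.
have N : \forall s \near t1, psif al be ga ta ka de y (x1, s) = polyf al be ga ta ka y (x1, s).
  have [B1 B2] := Ap.
  have : nbhs t1 (ball ta ta) by apply: open_nbhs_nbhs; split => //; exact: ball_open.
  by apply: filterS => s Bs; apply: psif_polyf; split.
rewrite (near_eq_derive _ N).
apply: (proj2 (@dq_lemma R R^o (fun s => polyf al be ga ta ka y (x1, s)) t1 1 _ ga _)) => h.
rewrite /polyf /= scR mulr1; ring.
Qed.
End R1.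

Section Aux.
Variable R : realType.
Variable d : nat.
Local Notation V := ('rV[R]_d * R)%type.

Lemma usc_sub (T : topologicalType) (D : set T) (F g : T -> R) :
  usc_on D F -> continuous g -> usc_on D (fun p => F p - g p).
Proof.
move=> uF cg p Dp e e0.
have e2 : 0 < e / 2 by rewrite divr_gt0.
have h1 := uF p Dp _ e2.
have h2 := (cvgrPdist_lt _ _).1 (cg p) _ e2.
have {}h2 := h2 _.
near=> q => Dq.
have H1 : D q -> F q < F p + e / 2 by near: q; exact: h1.
have H2 : `|g p - g q| < e / 2 by near: q; exact: h2.
have := H1 Dq; move: H2; rewrite ltr_norml => /andP[H2 H3]. lra.
Unshelve. all: by end_near. Qed.

Lemma lip_cont (f : V -> R) : Defs.lipschitz f -> continuous f.
Proof.
move=> [L HL] p; apply/cvgrPdist_lt => e e0.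
have [L0|L0] := leP L 0.
  near=> q; have := HL p q; have := normr_ge0 (p - q).
  have := normr_ge0 (f p - f q); nra.
near=> q.
have : `|p - q| < e / L.
  near: q; have : 0 < e / L by rewrite divr_gt0.
  move=> eL; apply: (@nbhs_ballP _ _ p [set q | `|p - q| < e / L]).2.
  exists (e / L) => // q; rewrite -ball_normE /ball_ /=; done.
move=> hq; apply: le_lt_trans (HL p q) _.
by rewrite -ltr_pdivlMl // mulrC.
Unshelve. all: by end_near. Qed.

Lemma Tfacts (be ga ta c t : R) : 0 < ta -> be - 2 * ga * ta = c -> 0 <= t ->
  (t <= 2 * ta -> be * t + ga * Num.min ((t - ta) ^+ 2) (ta ^+ 2) - ga * ta ^+ 2 = c * t + ga * t ^+ 2) /\
  (2 * ta <= t -> be * t + ga * Num.min ((t - ta) ^+ 2) (ta ^+ 2) - ga * ta ^+ 2 = be * t).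
Proof.
move=> ta0 hc t0; split => ht.
  rewrite min_l; last by nra.
  rewrite -hc; ring.
rewrite min_r; last by nra.
ring.
Qed.

Lemma Q_ge0 (ka de : R) (y x : 'rV[R]_d) : 0 <= ka ->
  0 <= ka * \sum_(i < d) Num.min ((x ord0 i - y ord0 i) ^+ 2) (de ^+ 2).
Proof.
move=> k0; apply: mulr_ge0 => //; apply: sumr_ge0 => i _.
by rewrite le_min !sqr_ge0.
Qed.

Lemma Q_big (ka de : R) (y x : 'rV[R]_d) i : 0 <= ka -> 0 <= de ->
  de <= `|x ord0 i - y ord0 i| ->
  ka * de ^+ 2 <= ka * \sum_(i < d) Num.min ((x ord0 i - y ord0 i) ^+ 2) (de ^+ 2).
Proof.
move=> k0 de0 h; apply: ler_wpM2l => //.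
rewrite (bigD1 i) //= min_r; last first.
  have -> : (x ord0 i - y ord0 i) ^+ 2 = `|x ord0 i - y ord0 i| ^+ 2 by rewrite real_normK // num_real.
  have := normr_ge0 (x ord0 i - y ord0 i); nra.
rewrite lerDl; apply: sumr_ge0 => j _; by rewrite le_min !sqr_ge0.
Qed.

Lemma Q_zero (de : R) (y : 'rV[R]_d) :
  \sum_(i < d) Num.min ((y ord0 i - y ord0 i) ^+ 2) (de ^+ 2) = 0.
Proof.
apply: big1 => i _; rewrite subrr expr0n /= min_l //; exact: sqr_ge0.
Qed.
End Aux.
Arguments Tfacts {R}.
Arguments rV_ball {R d y x e}.
Arguments ball_rV {R d y x e}.
Arguments ball_R {R c e s}.
Arguments psif_test {R d}.
Arguments psif_dt {R d}.
Arguments psif_polyf {R d}.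
Arguments regA_open {R d}.
Arguments Q_ge0 {R d}.
Arguments Q_big {R d}.
Arguments Q_zero {R d}.
Arguments lip_cont {R d}.
Arguments usc_sub {R T D F g}.
Arguments regA {R d}.

Section Core.
Variable R : realType.
Variable d : nat.
Local Notation V := ('rV[R]_d * R)%type.

Lemma core (U : set 'rV[R]_d) (F : V -> R) (C : R) :
  open U -> 0 < C ->
  usc_on [set p : V | U p.1 /\ 0 <= p.2] F ->
  (forall x t, U x -> 0 <= t -> F (x, t) <= C * t) ->
  forall x0 t0, U x0 -> 0 < t0 -> 0 < F (x0, t0) ->
  exists al be ga ta ka de (x1 : 'rV[R]_d) (t1 : R),
   [/\ (0 < ta /\ 0 < de) /\ regA ta de x0 (x1, t1), U x1 /\ 0 < t1,
       0 < F (x1, t1) /\ F (x1, t1) - psif al be ga ta ka de x0 (x1, t1) = 0,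
       (forall x t, U x -> 0 < t -> F (x, t) - psif al be ga ta ka de x0 (x, t) <= 0)
     & 0 < be + 2 * ga * (t1 - ta)].
Proof.
move=> oU C0 uF FC x0 t0 Ux0 t00 Fpos.
have [a ha] : exists a, a = F (x0, t0) by eexists.
rewrite -ha in Fpos.
have aC : a <= C * t0 by rewrite ha; apply: FC => //; exact: ltW.
have [r r0 Br] : exists2 r : R, 0 < r & ball x0 r `<=` U.
  have : nbhs x0 U by apply: open_nbhs_nbhs; split.
  by move=> /nbhs_ballP [r r0 H]; exists r.
have [de hde] : exists de : R, de = r / 2 by eexists.
have de0 : 0 < de by rewrite hde divr_gt0.
have boxU : forall x : 'rV[R]_d, (forall i, `|x ord0 i - x0 ord0 i| <= de) -> U x.
  move=> x hx; apply: Br; apply: (rV_ball r0) => i.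
  apply: le_lt_trans (hx i) _; rewrite hde; lra.
have [c hc] : exists c : R, c = a / (4 * t0) by eexists.
have ct0 : c * t0 = a / 4 by rewrite hc; field; lra.
have c0 : 0 < c by rewrite hc divr_gt0 // mulr_gt0.
have [be hbe] : exists be : R, be = C + 1 by eexists.
have [ta hta] : exists ta : R, ta = 2 * (C + 1) * t0 ^+ 2 / a + t0 by eexists.
have tat0 : t0 < ta.
  rewrite hta ltrDr; apply: divr_gt0 => //; apply: mulr_gt0; [lra | exact: exprn_gt0].
have ta0 : 0 < ta by lra.
have ata : a * ta = 2 * (C + 1) * t0 ^+ 2 + a * t0 by rewrite hta; field; lra.
have cC : c * 4 <= C by nra.
have [ga hga] : exists ga : R, ga = (C + 1 - c) / (2 * ta) by eexists.
have ga0 : 0 < ga by rewrite hga divr_gt0 //; lra.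
have gata : ga * (2 * ta) = C + 1 - c by rewrite hga; field; lra.
have hbc : be - 2 * ga * ta = c by rewrite hbe; lra.
have [ka hka] : exists ka : R, ka = 2 * C * ta / de ^+ 2 by eexists.
have kade : ka * de ^+ 2 = 2 * C * ta by rewrite hka; field; lra.
have ka0 : 0 < ka by rewrite hka divr_gt0 // ?exprn_gt0 //; nra.
have gat0 : ga * t0 ^+ 2 <= a / 4.
  have h1 : (ga * t0 ^+ 2) * (2 * ta) <= (a / 4) * (2 * ta).
    have -> : (ga * t0 ^+ 2) * (2 * ta) = (C + 1 - c) * t0 ^+ 2 by rewrite -gata; ring.
    have t2 : 0 < t0 ^+ 2 by exact: exprn_gt0.
    nra.
  by rewrite -(ler_pM2r (_ : 0 < 2 * ta)) //; lra.
pose Q (x : 'rV[R]_d) := ka * \sum_(i < d) Num.min ((x ord0 i - x0 ord0 i) ^+ 2) (de ^+ 2).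
pose T (t : R) := be * t + ga * Num.min ((t - ta) ^+ 2) (ta ^+ 2) - ga * ta ^+ 2.
pose ps := psif (- (ga * ta ^+ 2)) be ga ta ka de x0.
have psE : forall x t, ps (x, t) = T t + Q x by move=> x t; rewrite /ps /psif /T /Q /=; ring.
pose Phi := fun p : V => F p - ps p.
have PhiE : forall x t, Phi (x, t) = F (x, t) - T t - Q x by move=> x t; rewrite /Phi psE; ring.
have TF : forall t, 0 <= t -> (t <= 2 * ta -> T t = c * t + ga * t ^+ 2) /\ (2 * ta <= t -> T t = be * t).
  move=> t t0'; exact: (Tfacts be ga ta c t ta0 hbc t0').
have [m0 hm0] : exists m0 : R, m0 = a - a / 4 - ga * t0 ^+ 2 by eexists.
have Phi0 : Phi (x0, t0) = m0.
  rewrite PhiE -ha hm0 (TF t0 (ltW t00)).1; last by lra.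
  rewrite /Q Q_zero mulr0 ct0; ring.
have m0pos : a / 2 <= m0 by lra.
have inner : forall x t, U x -> 0 < t -> m0 <= Phi (x, t) ->
   [/\ t < 2 * ta, m0 <= C * t & forall i, `|x ord0 i - x0 ord0 i| < de].
  move=> x t Ux tp hm.
  have FCt := FC x t Ux (ltW tp).
  have Qge : 0 <= Q x by exact: (Q_ge0 ka de x0 x (ltW ka0)).
  have [T1 T2] := TF t (ltW tp).
  rewrite PhiE in hm.
  have t2 : t < 2 * ta.
    rewrite ltNge; apply/negP => ht; move: hm; rewrite (T2 ht) hbe; nra.
  move: hm; rewrite (T1 (ltW t2)) => hm.
  have gt2 : 0 <= ga * t ^+ 2 by apply: mulr_ge0; [exact: ltW | exact: sqr_ge0].
  split => //; first by nra.
  move=> i; rewrite ltNge; apply/negP => hi.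
  have := Q_big ka de x0 x i (ltW ka0) (ltW de0) hi; rewrite kade -/(Q x) => hQ.
  nra.
pose K := [set v : 'rV[R]_d | forall i, `[x0 ord0 i - de, x0 ord0 i + de]%classic (v ord0 i)]
          `*` `[m0 / C, 2 * ta]%classic.
have cK : compact K.
  apply: compact_setX; last exact: segment_compact.
  apply: (@rV_compact _ _ (fun i => `[x0 ord0 i - de, x0 ord0 i + de]%classic)) => i.
  exact: segment_compact.
have m0C : 0 < m0 / C by rewrite divr_gt0 //; lra.
have KD : K `<=` [set p : V | U p.1 /\ 0 <= p.2].
  move=> [x t] [/= hx ht]; split => /=.
    apply: boxU => i; have := hx i; rewrite /= in_itv /= => /andP[h1 h2].
    rewrite ler_norml; apply/andP; split; lra.
  move: ht; rewrite /= in_itv /= => /andP[h1 h2]; lra.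
have uPhi : usc_on [set p : V | U p.1 /\ 0 <= p.2] Phi.
  apply: usc_sub uF _; apply: lip_cont.
  exact: (psif_lip (- (ga * ta ^+ 2)) be ga ta ka de x0 (ltW ta0) (ltW de0)).
have Kx0 : K (x0, t0).
  split => /=.
    move=> i; rewrite /= in_itv /=; apply/andP; split; lra.
  rewrite /= in_itv /=; apply/andP; split; last by lra.
  by rewrite ler_pdivrMr //; nra.
have Kb : exists B, forall p, K p -> Phi p <= B.
  exists (C * (2 * ta)) => -[x t] Kp; have [Ux tp] := KD _ Kp.
  have [_ ht] := Kp; move: ht; rewrite /= in_itv /= => /andP[h1 h2].
  rewrite PhiE (TF t tp).1 //.
  have FCt := FC x t Ux tp.
  have Qge : 0 <= Q x by exact: (Q_ge0 ka de x0 x (ltW ka0)).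
  have gt2 : 0 <= ga * t ^+ 2 by apply: mulr_ge0; [exact: ltW | exact: sqr_ge0].
  nra.
have [[x1 t1] Kp1 Hmax] := usc_max cK KD uPhi (ex_intro _ _ Kx0) Kb.
have [M hM] : exists M, M = Phi (x1, t1) by eexists.
have Mm0 : m0 <= M by rewrite hM -Phi0; apply: Hmax.
have [Ux1 t1ge] := KD _ Kp1.
have t1pos : 0 < t1.
  have [_ ht] := Kp1; move: ht; rewrite /= in_itv /= => /andP[h1 h2]; lra.
have Mm0' : m0 <= Phi (x1, t1) by rewrite -hM.
have [t1lt _ hcoord] := inner x1 t1 Ux1 t1pos Mm0'.
have glob : forall x t, U x -> 0 < t -> Phi (x, t) <= M.
  move=> x t Ux tpos; case: (ltP (Phi (x, t)) m0) => h; first by lra.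
  have [tl ctm hcx] := inner x t Ux tpos h.
  rewrite hM; apply: Hmax; split => /=.
    move=> i; rewrite /= in_itv /=; have := hcx i; rewrite ltr_norml => /andP[h1 h2].
    apply/andP; split; lra.
  rewrite /= in_itv /=; apply/andP; split; last by lra.
  by rewrite ler_pdivrMr // mulrC.
exists (M - ga * ta ^+ 2), be, ga, ta, ka, de, x1, t1.
have psM : forall x t, psif (M - ga * ta ^+ 2) be ga ta ka de x0 (x, t) = M + T t + Q x.
  by move=> x t; rewrite /psif /T /Q /=; ring.
have [T1 _] := TF t1 (ltW t1pos).
have Tt1 := T1 (ltW t1lt).
split => //.
- split; first by split => //; exact: (lt_trans t00 tat0).
  split; first by apply/ball_R; rewrite /= ltr_norml; apply/andP; split; lra.
  exact: rV_ball.
- have Qge : 0 <= Q x1 by exact: (Q_ge0 ka de x0 x1 (ltW ka0)).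
  have gt2 : 0 <= ga * t1 ^+ 2 by apply: mulr_ge0; [exact: ltW | exact: sqr_ge0].
  have hF : F (x1, t1) = M + T t1 + Q x1 by rewrite hM PhiE; ring.
  split; first by rewrite hF Tt1; nra.
  by rewrite psM hF; ring.
- move=> x t Ux tpos; rewrite psM; have := glob x t Ux tpos; rewrite PhiE; lra.
- have -> : be + 2 * ga * (t1 - ta) = c + 2 * ga * t1 by rewrite -hbc; ring.
  nra.
Qed.
End Core.
Arguments core {R d U F C}.

Lemma psif_neg (R : realType) (d : nat) al be ga ta ka de (y : 'rV[R]_d) p :
  psif (- al) (- be) (- ga) ta (- ka) de y p = - psif al be ga ta ka de y p.
Proof. rewrite /psif; ring. Qed.

Theorem lemma3p3 (R : realType) (d : nat) (U : set 'rV[R]_d)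
    (F G : 'rV[R]_d * R -> R) (C : R) :
  open U -> 0 < C ->
  usc_on [set p : 'rV[R]_d * R | U p.1 /\ 0 <= p.2] F ->
  lsc_on [set p : 'rV[R]_d * R | U p.1 /\ 0 <= p.2] G ->
  (forall (x : 'rV[R]_d) (t : R), U x -> 0 <= t -> F (x, t) <= C * t) ->
  (forall (x : 'rV[R]_d) (t : R), U x -> 0 <= t -> G (x, t) >= - (C * t)) ->
  visc_min_sub U F -> visc_max_super U G ->
  (forall (x : 'rV[R]_d) (t : R), U x -> 0 <= t -> F (x, t) <= 0) /\
  (forall (x : 'rV[R]_d) (t : R), U x -> 0 <= t -> G (x, t) >= 0).
Proof.
move=> oU C0 uF lG FC GC vF vG.
split.
- move=> x t Ux t0.
  have [ht|ht] := leP t 0.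
    have -> : t = 0 by apply/eqP; rewrite eq_le ht t0.
    by have := FC x 0 Ux (lexx 0); rewrite mulr0.
  rewrite leNgt; apply/negP => Fp.
  have [al [be [ga [ta [ka [de [x1 [t1 [[[ta0 de0] Ap] [Ux1 t1p] [Fp1 Feq] Hle hdt]]]]]]]]] :=
    core oU C0 uF FC x t Ux ht Fp.
  have := vF (psif al be ga ta ka de x) x1 t1 Ux1 t1p (psif_test al be ga ta ka de x _ ta0 de0 Ap) Hle Feq.
  case => h; first by lra.
  by move: h; rewrite psif_dt //; lra.
- move=> x t Ux t0.
  pose F' := fun p => - G p.
  have uF' : usc_on [set p : 'rV[R]_d * R | U p.1 /\ 0 <= p.2] F'.
    move=> p Dp e e0; have := lG p Dp e e0; apply: filterS => q H Dq.
    have := H Dq; rewrite /F'; lra.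
  have F'C : forall x t, U x -> 0 <= t -> F' (x, t) <= C * t.
    by move=> x' t' Ux' t0'; have := GC x' t' Ux' t0'; rewrite /F'; lra.
  have [ht|ht] := leP t 0.
    have -> : t = 0 by apply/eqP; rewrite eq_le ht t0.
    by have := GC x 0 Ux (lexx 0); rewrite mulr0 oppr0.
  rewrite leNgt; apply/negP => Gn.
  have Fp : 0 < F' (x, t) by rewrite /F' oppr_gt0.
  have [al [be [ga [ta [ka [de [x1 [t1 [[[ta0 de0] Ap] [Ux1 t1p] [Fp1 Feq] Hle hdt]]]]]]]]] :=
    core oU C0 uF' F'C x t Ux ht Fp.
  have Hge : forall x' t', U x' -> 0 < t' ->
      G (x', t') - psif (- al) (- be) (- ga) ta (- ka) de x (x', t') >= 0.
    move=> x' t' Ux' t'p; have := Hle x' t' Ux' t'p; rewrite psif_neg /F'; lra.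
  have Geq : G (x1, t1) - psif (- al) (- be) (- ga) ta (- ka) de x (x1, t1) = 0.
    by move: Feq; rewrite psif_neg /F'; lra.
  have := vG _ x1 t1 Ux1 t1p (psif_test (- al) (- be) (- ga) ta (- ka) de x _ ta0 de0 Ap) Hge Geq.
  case => h; first by move: Fp1; rewrite /F'; lra.
  by move: h; rewrite psif_dt //; lra.
Qed.
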